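(* Let $K$ be a field of characteristic $0$, $W_n=K[x_1,\dots,x_n]\langle D_{x_1},\dots,D_{x_n}\rangle$ the Weyl algebra, and $S\subseteq\{1,\dots,n\}$ non-empty. For each $j\in S$ let $L_j=\sum_{k=0}^{r_j}\ell_{j,k}D_{x_j}^k\in K[x_1,\dots,x_n]\langle D_{x_j}\rangle$ with $\ell_{j,r_j}\ne0$ and $\max_k\operatorname{tdeg}(\ell_{j,k})=d_j$. Define $C=\operatorname{lcm}_{j\in S}(\ell_{j,r_j})$, $\tilde L_j=(C/\ell_{j,r_j})L_j$, $d_C=\sum_{j\in S}d_j$, $B=\prod_{j\in S}\{0,1,\dots,r_j-1\}\subseteq\mathbb N^S$, $J=\sum_{j\in S}W_n\tilde L_j$, and for $d\in\mathbb N$, $r\in\mathbb Z$, $$\mathcal H_{d,r}=\bigoplus_{\beta\in\mathbb N^S:\ |\beta|\le r\ \text{or}\ \beta\in B}K[x_1,\dots,x_n]_{\le d}\,D_S^\beta,\qquad D_S^\beta=\prod_{j\in S}D_{x_j}^{\beta_j}.$$ Then for all $u,t\in\mathbb N$ and $v\in\mathbb Z$ with $u\ge v$, one has $C^u\mathcal H_{t,v}\subseteq\mathcal H_{t+ud_C,0}+J$. In particular, for every $\alpha\in\mathbb N^S$, $C^{|\alpha|}D_S^\alpha\in\mathcal H_{|\alpha|d_C,0}+J$.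
   Context: $K[x_1,\dots,x_n]_{\le d}$ denotes the polynomials of total degree at most $d$; in $\mathcal H_{d,r}$ polynomial coefficients are written to the left of the monomials $D_S^\beta$. $C^u\mathcal H_{t,v}$ denotes the set of products $C^uh$ in $W_n$ with $h\in\mathcal H_{t,v}$; $J$ is the left ideal of $W_n$ generated by the $\tilde L_j$, $j\in S$. $\operatorname{tdeg}$ is total degree. *)

(* Defs.v *)
From HB Require Import structures.
From mathcomp Require Import all_boot all_order all_algebra.
From mathcomp Require Import mpoly.
Set Implicit Arguments. Unset Strict Implicit. Unset Printing Implicit Defensive.
Import Order.TTheory GRing.Theory Num.Theory.
Local Open Scope ring_scope.

(* The Weyl algebra W_n = K[x_1..x_n]<D_{x_1},..,D_{x_n}> is realised as the
   algebra of differential operators with polynomial coefficients acting on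
   K[x_1..x_n] (faithful in characteristic 0). *)

Section Weyl.
Variables (K : fieldType) (n : nat).

Definition wop_t := {mpoly K[n]} -> {mpoly K[n]}.

(* the operator  sum_{(p,beta) in s} p * D^beta ;
   D^beta = prod_i D_{x_i}^{beta_i} is the parallel derivative p^`M[beta] *)
Definition wop (s : seq ({mpoly K[n]} * 'X_{1..n})) : wop_t :=
  fun f => \sum_(pb <- s) pb.1 * f^`M[pb.2].

(* total degree of p is <= d (msize p = 1 + tdeg p, msize 0 = 0) *)
Definition tdeg_le (d : nat) (p : {mpoly K[n]}) : bool := (msize p <= d.+1)%N.

(* total degree tdeg p (with the convention tdeg 0 = 0) *)
Definition tdeg (p : {mpoly K[n]}) : nat := (msize p).-1.

(* beta is a multi-index in N^S (zero outside S) *)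
Definition suppS (S : {set 'I_n}) (b : 'X_{1..n}) : bool :=
  [forall i, (i \notin S) ==> (b i == 0%N)].

Definition inB (S : {set 'I_n}) (r : 'I_n -> nat) (b : 'X_{1..n}) : bool :=
  [forall i, (i \in S) ==> (b i < r i)%N].

Definition inH (S : {set 'I_n}) (r : 'I_n -> nat) (d : nat) (z : int)
  (A : wop_t) : Prop :=
  exists s, A = wop s /\
    all (fun pb => [&& tdeg_le d pb.1, suppS S pb.2 &
                       ((mdeg pb.2)%:Z <= z) || inB S r pb.2]) s.

Definition Lop (l : 'I_n -> nat -> {mpoly K[n]}) (r : 'I_n -> nat) (j : 'I_n)
  : wop_t :=
  wop [seq (l j k, (U_(j) *+ k)%MM) | k <- iota 0 (r j).+1].

Definition inJ (S : {set 'I_n}) (Lt : 'I_n -> wop_t) (A : wop_t) : Prop :=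
  exists s : 'I_n -> seq ({mpoly K[n]} * 'X_{1..n}),
    A = fun f => \sum_(j in S) wop (s j) (Lt j f).

Definition mdvd (a b : {mpoly K[n]}) : Prop := exists q, b = q * a.

Definition is_lcm (S : {set 'I_n}) (a : 'I_n -> {mpoly K[n]}) (C : {mpoly K[n]})
  : Prop :=
  (forall j, j \in S -> mdvd (a j) C) /\
  (forall M, (forall j, j \in S -> mdvd (a j) M) -> mdvd C M).

Definition dj (l : 'I_n -> nat -> {mpoly K[n]}) (r : 'I_n -> nat) (j : 'I_n)
  : nat := \max_(k < (r j).+1) tdeg (l j k).

Definition dC (S : {set 'I_n}) (l : 'I_n -> nat -> {mpoly K[n]})
  (r : 'I_n -> nat) : nat := (\sum_(j in S) dj l r j)%N.

End Weyl.

(* Main.v *)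
Require Import Defs.
From HB Require Import structures.
From mathcomp Require Import all_boot all_order all_algebra.
From mathcomp Require Import mpoly.
From mathcomp Require Import ring zify.
From Stdlib Require Import FunctionalExtensionality.
Set Implicit Arguments. Unset Strict Implicit. Unset Printing Implicit Defensive.
Import Order.TTheory GRing.Theory Num.Theory.
Local Open Scope ring_scope.
Section Aux.
Variables (K : fieldType) (n : nat).
Local Notation P := {mpoly K[n]}.

Lemma msize_mderiv i (p : P) : (msize (p^`M(i)) <= msize p)%N.
Proof.
rewrite [X in (X <= _)%N]msizeE; apply/bigmax_leqP_seq => m Hm _.
have: p@_(m + U_(i)) != 0.
  move: Hm; rewrite mcoeff_msupp mcoeff_mderiv.
  by apply: contra => /eqP ->; rewrite mul0rn.
by rewrite -mcoeff_msupp => /msize_mdeg_lt; rewrite mdegD mdeg1 addn1 => /ltnW.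
Qed.

Lemma tdeg_le_deriv d i (p : P) : tdeg_le d p -> tdeg_le d (p^`M(i)).
Proof. by rewrite /tdeg_le => H; apply: leq_trans (msize_mderiv i p) H. Qed.

Lemma tdeg_leM a b (p c : P) : tdeg_le a p -> tdeg_le b c -> tdeg_le (a + b) (p * c).
Proof.
rewrite /tdeg_le => Hp Hc.
have [->|pn0] := eqVneq p 0; first by rewrite mul0r msize0.
have [->|cn0] := eqVneq c 0; first by rewrite mulr0 msize0.
rewrite msizeM //.
have h1: (0 < msize p)%N by rewrite lt0n msize_poly_eq0.
have h2: (0 < msize c)%N by rewrite lt0n msize_poly_eq0.
rewrite -subn1 leq_subLR.
apply: leq_trans (leq_add Hp Hc) _; lia.
Qed.

Lemma tdeg_le_mono a b (p : P) : (a <= b)%N -> tdeg_le a p -> tdeg_le b p.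
Proof. by rewrite /tdeg_le => ab H; apply: leq_trans H _. Qed.

Lemma tdeg_le_tdeg (p : P) : tdeg_le (tdeg p) p.
Proof. by rewrite /tdeg_le /tdeg; apply: leqSpred. Qed.

Lemma tdeg_leN d (p : P) : tdeg_le d (- p) = tdeg_le d p.
Proof. by rewrite /tdeg_le msizeN. Qed.

Lemma tdeg_le1 d : tdeg_le d (1 : P).
Proof. by rewrite /tdeg_le msize1. Qed.

Lemma tdeg_leX d u (C : P) : tdeg_le d C -> tdeg_le (u * d) (C ^+ u).
Proof.
move=> H; elim: u => [|u IH]; first by rewrite expr0 tdeg_le1.
by rewrite exprS mulSn; apply: tdeg_leM.
Qed.

Lemma wop_cat s1 s2 (f : P) : wop (s1 ++ s2) f = wop s1 f + wop s2 f.
Proof. by rewrite /wop big_cat. Qed.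

Lemma wop_nil (f : P) : wop [::] f = 0.
Proof. by rewrite /wop big_nil. Qed.

Lemma wop_cons x s (f : P) : wop (x :: s) f = x.1 * f^`M[x.2] + wop s f.
Proof. by rewrite /wop big_cons. Qed.

Lemma mcommute (a : P) (g : 'X_{1..n}) : exists s,
  (forall f : P, (a * f)^`M[g] = a * f^`M[g] + wop s f) /\
  all (fun cb => [&& tdeg_le (tdeg a) cb.1, (cb.2 <= g)%MM & (mdeg cb.2 < mdeg g)%N]) s.
Proof.
have [k Hk] : exists k, mdeg g = k by exists (mdeg g).
elim: k g Hk => [|k IH] g Hk.
  move/eqP: Hk; rewrite mdeg_eq0 => /eqP ->.
  by exists [::]; split => // f; rewrite !mderivm0m wop_nil addr0.
have : exists i, (0 < g i)%N.
  apply/existsP; apply: contraT; rewrite negb_exists => /forallP H.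
  have : mdeg g = 0%N.
    by rewrite mdegE big1 // => i _; apply/eqP; rewrite -leqn0 leqNgt H.
  by rewrite Hk.
case=> i gi.
have Ule : (U_(i) <= g)%MM.
  apply/mnm_lepP => j; rewrite mnm1E; case: eqP => [<-|] //.
set g' := (g - U_(i))%MM.
have eg : g = (g' + U_(i))%MM by rewrite submK.
have Hk' : mdeg g' = k by move: Hk; rewrite eg mdegD mdeg1 addn1 => -[].
have [s [Hs Hall]] := IH g' Hk'.
exists ((a^`M(i), g') :: [seq (cb.1^`M(i), cb.2) | cb <- s] ++
        [seq (cb.1, (cb.2 + U_(i))%MM) | cb <- s]); split.
  move=> f; rewrite eg !mderivmDm !mderivmU1m Hs wop_cons wop_cat /=.
  rewrite mderivD mderivM /wop !big_map raddf_sum /=.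
  rewrite (eq_bigr (fun cb => cb.1^`M(i) * f^`M[cb.2] + cb.1 * f^`M[(cb.2 + U_(i))%MM])); last first.
    by move=> cb _; rewrite mderivM mderivmDm mderivmU1m.
  rewrite big_split /=.
  by rewrite [a^`M(i) * _ + _]addrC -!addrA.
have g'le : (g' <= g)%MM by rewrite eg; apply/mnm_lepP => j; rewrite mnmDE leq_addr.
rewrite /= all_cat !all_map.
apply/and3P; split.
- rewrite tdeg_le_deriv ?tdeg_le_tdeg //= g'le /= Hk Hk' ltnSn //.
- apply/allP => cb /(allP Hall) /and3P [h1 h2 h3] /=.
  rewrite tdeg_le_deriv //= (lepm_trans h2 g'le) /= Hk -Hk'; exact: ltnW.
- apply/allP => cb /(allP Hall) /and3P [h1 h2 h3] /=.
  rewrite h1 /= mdegD mdeg1 addn1 Hk -Hk' ltnS h3 andbT eg.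
  apply/mnm_lepP => j; rewrite !mnmDE leq_add2r; exact: (mnm_lepP h2).
Qed.


Lemma tdeg_le_trans d (a c : P) : tdeg_le (tdeg a) c -> tdeg_le d a -> tdeg_le d c.
Proof.
rewrite /tdeg_le /tdeg => H1 H2; apply: leq_trans H1 _.
by move: H2; case: (msize a).
Qed.

Lemma wop_neg s (f : P) :
  wop [seq (- pb.1, pb.2) | pb <- s] f = - wop s f.
Proof. by rewrite /wop big_map -sumrN; apply: eq_bigr => pb _; rewrite mulNr. Qed.

Lemma wop_shift (p : P) m s (f : P) :
  p * wop s (f^`M[m]) = wop [seq (p * cb.1, (m + cb.2)%MM) | cb <- s] f.
Proof.
rewrite /wop big_map mulr_sumr; apply: eq_bigr => cb _.
by rewrite mderivmDm mulrA.
Qed.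

Variables (S : {set 'I_n}).

Lemma suppS_le a b : (a <= b)%MM -> suppS S b -> suppS S a.
Proof.
move=> /mnm_lepP H /forallP Hb; apply/forallP => i; apply/implyP => iS.
by move: (Hb i); rewrite iS /= -!leqn0 => /(leq_trans (H i)).
Qed.

Lemma suppS_add a b : suppS S a -> suppS S b -> suppS S (a + b)%MM.
Proof.
move=> /forallP Ha /forallP Hb; apply/forallP => i; apply/implyP => iS.
move: (Ha i) (Hb i); rewrite iS mnmDE /= => /eqP -> /eqP -> //.
Qed.

Lemma suppS_U j k : j \in S -> suppS S (U_(j) *+ k)%MM.
Proof.
move=> jS; apply/forallP => i; apply/implyP => iS.
rewrite mulmnE mnm1E; have [e|] := eqVneq j i; last by [].
by move: iS; rewrite -e jS.
Qed.

End Aux.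

Section Main.
Variables (K : fieldType) (n : nat) (S : {set 'I_n}) (r : 'I_n -> nat)
  (l : 'I_n -> nat -> {mpoly K[n]}) (C : {mpoly K[n]}) (q : 'I_n -> {mpoly K[n]}).
Local Notation P := {mpoly K[n]}.
Variable dc : nat.
Hypothesis Hq : forall j, j \in S -> C = q j * l j (r j).
Hypothesis HCd : tdeg_le dc C.
Hypothesis Hqd : forall j k, j \in S -> (k <= r j)%N -> tdeg_le dc (q j * l j k).
Variable Lt : 'I_n -> P -> P.
Hypothesis LtE : forall j f, Lt j f = q j * Lop l r j f.

Definition condH T (pb : P * 'X_{1..n}) :=
  [&& tdeg_le T pb.1, suppS S pb.2 & ((mdeg pb.2)%:Z <= 0) || inB S r pb.2].

Definition Good T (A : P -> P) := exists s1 (s2 : 'I_n -> seq (P * 'X_{1..n})),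
  all (condH T) s1 /\ forall f, A f = wop s1 f + \sum_(j in S) wop (s2 j) (Lt j f).

Lemma Good_ext T A B : (forall f, A f = B f) -> Good T A -> Good T B.
Proof. by move=> E [s1 [s2 [H1 E1]]]; exists s1, s2; split => // f; rewrite -E. Qed.

Lemma Good0 T : Good T (fun => 0).
Proof.
exists [::], (fun => [::]); split => // f.
by rewrite wop_nil big1 ?addr0 // => j _; rewrite wop_nil.
Qed.

Lemma Good_add T A B : Good T A -> Good T B -> Good T (fun f => A f + B f).
Proof.
move=> [s1 [s2 [H1 E1]]] [s1' [s2' [H1' E1']]].
exists (s1 ++ s1'), (fun j => s2 j ++ s2' j); split; first by rewrite all_cat H1 H1'.
move=> f; rewrite E1 E1' wop_cat.
under [in RHS]eq_bigr do rewrite wop_cat.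
by rewrite big_split /= addrACA.
Qed.

Lemma Good_opp T A : Good T A -> Good T (fun f => - A f).
Proof.
move=> [s1 [s2 [H1 E1]]].
exists [seq (- pb.1, pb.2) | pb <- s1], (fun j => [seq (- pb.1, pb.2) | pb <- s2 j]).
split.
  rewrite all_map; apply/allP => pb /(allP H1).
  by rewrite /condH /= tdeg_leN.
move=> f; rewrite E1 (wop_neg s1).
under [in RHS]eq_bigr do rewrite wop_neg.
by rewrite sumrN opprD.
Qed.

Lemma Good_sub T A B : Good T A -> Good T B -> Good T (fun f => A f - B f).
Proof. by move=> HA HB; apply: Good_add => //; apply: Good_opp. Qed.

Lemma Good_sum T (I : eqType) (s : seq I) (F : I -> P -> P) :
  (forall k, k \in s -> Good T (F k)) -> Good T (fun f => \sum_(k <- s) F k f).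
Proof.
elim: s => [|x s IH] H.
  by apply: Good_ext (Good0 T) => f; rewrite big_nil.
apply: Good_ext (Good_add (H x (mem_head _ _)) (IH _)).
  by move=> f; rewrite big_cons.
by move=> k ks; apply: H; rewrite in_cons ks orbT.
Qed.

Lemma Good_J T j c g : j \in S -> Good T (fun f => c * (Lt j f)^`M[g]).
Proof.
move=> jS; exists [::], (fun i => if i == j then [:: (c, g)] else [::]); split => // f.
rewrite wop_nil add0r (bigD1 j) //= eqxx big1 ?addr0.
  by rewrite wop_cons wop_nil addr0.
by move=> i /andP [_ /negbTE ->]; rewrite wop_nil.
Qed.

Lemma Good_single T c g : tdeg_le T c -> suppS S g -> (mdeg g == 0%N) || inB S r g ->
  Good T (fun f => c * f^`M[g]).
Proof.
move=> Hc Hg Hb; exists [:: (c, g)], (fun => [::]); split.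
  rewrite /= andbT /condH /= Hc Hg /=.
  by case/orP: Hb => [/eqP ->|->]; rewrite ?orbT.
move=> f; rewrite wop_cons wop_nil addr0 big1 ?addr0 // => j _.
by rewrite wop_nil.
Qed.

Definition MainP u := forall t p g, tdeg_le t p -> suppS S g ->
  (mdeg g <= u)%N || inB S r g -> Good (t + u * dc) (fun f => C ^+ u * (p * f^`M[g])).

Lemma seq_good u : MainP u -> forall t s,
  all (fun pb => [&& tdeg_le t pb.1, suppS S pb.2 & (mdeg pb.2 <= u)%N || inB S r pb.2]) s ->
  Good (t + u * dc) (fun f => C ^+ u * wop s f).
Proof.
move=> IH t; elim => [|x s IHs] /=.
  by move=> _; apply: Good_ext (Good0 _) => f; rewrite wop_nil mulr0.
case/andP => /and3P [h1 h2 h3] Hs.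
apply: Good_ext (Good_add (IH _ _ _ h1 h2 h3) (IHs Hs)) => f.
by rewrite wop_cons mulrDr.
Qed.

Lemma Good_X u : MainP u -> forall t (p : P) j k (a : P) (s : seq (P * 'X_{1..n})) (g : 'X_{1..n}), j \in S -> (k <= r j)%N ->
  tdeg_le t p -> tdeg_le dc a -> suppS S g -> (mdeg g + k <= u.+1)%N ->
  all (fun cb => [&& tdeg_le (tdeg a) cb.1, (cb.2 <= g)%MM & (mdeg cb.2 < mdeg g)%N]) s ->
  Good (t + dc + u * dc) (fun f => C ^+ u * p * wop s (f^`M[U_(j) *+ k])).
Proof.
move=> IH t p j k a s g jS kr Hp Ha Hg Hk Hs.
apply: Good_ext (seq_good IH (t := t + dc) (s := [seq (p * cb.1, (U_(j) *+ k + cb.2)%MM) | cb <- s]) _).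
  by move=> f; rewrite -mulrA wop_shift.
rewrite all_map; apply/allP => cb /(allP Hs) /and3P [h1 h2 h3] /=.
rewrite tdeg_leM //=; last exact: tdeg_le_trans h1 Ha.
rewrite suppS_add ?suppS_U //=; last exact: suppS_le h2 Hg.
rewrite mdegD mdegMn mdeg1 mul1n; apply/orP; left.
rewrite -ltnS; apply: leq_trans Hk; rewrite addnC ltn_add2r //.
Qed.


Lemma main u : MainP u.
Proof.
elim: u => [|u IH] t p g Hp Hg Hu.
  have Hc : tdeg_le (t + 0 * dc) (C ^+ 0 * p) by rewrite expr0 mul1r mul0n addn0.
  apply: Good_ext (Good_single Hc Hg _); first by move=> f; rewrite mulrA.
  by case/orP: Hu => [|->]; rewrite ?orbT // leqn0 => ->.
have HcT : tdeg_le (t + u.+1 * dc) (C ^+ u.+1 * p).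
  by rewrite addnC; apply: tdeg_leM => //; apply: tdeg_leX.
case: (boolP ((mdeg g == 0%N) || inB S r g)) => Hb.
  by apply: Good_ext (Good_single HcT Hg Hb) => f; rewrite mulrA.
move: Hb; rewrite negb_or => /andP [Hg0 nB].
have Hu' : (mdeg g <= u.+1)%N by case/orP: Hu => // Hi; rewrite Hi in nB.
move: nB => /forallPn [j]; rewrite negb_imply -leqNgt => /andP [jS rj].
set m := (U_(j) *+ r j)%MM.
have mle : (m <= g)%MM.
  apply/mnm_lepP => i; rewrite mulmnE mnm1E.
  by have [<-|] := eqVneq j i; [rewrite mul1n | rewrite mul0n].
set γ := (g - m)%MM.
have eg : g = (m + γ)%MM by rewrite addmC submK.
have Hγ : suppS S γ by apply: suppS_le Hg; apply/mnm_lepP => i; rewrite mnmBE leq_subr.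
have dg : mdeg g = (mdeg γ + r j)%N by rewrite {1}eg mdegD mdegMn mdeg1 mul1n addnC.
have T0 : (t + u.+1 * dc = t + dc + u * dc)%N by rewrite mulSn addnA.
have LtE' : forall f, Lt j f = \sum_(0 <= k < (r j).+1) (q j * l j k) * f^`M[U_(j) *+ k].
  move=> f; rewrite LtE /Lop /wop big_map mulr_sumr; apply: eq_bigr => k _.
  by rewrite mulrA.
have HJ := Good_J (t + u.+1 * dc) (C ^+ u * p) γ jS.
have HL : Good (t + u.+1 * dc) (fun f => C ^+ u * p * ((q j * l j (r j)) * f^`M[m])^`M[γ]
                               - C ^+ u.+1 * (p * f^`M[g])).
  rewrite T0 -Hq //.
  have [s [Hs Hall]] := mcommute C γ.
  apply: Good_ext (Good_X IH (t:=t) (p:=p) (j:=j) (k:= r j) (a:=C) (s:=s) (g:=γ)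
                    jS (leqnn _) Hp HCd Hγ _ Hall).
    move=> f; rewrite Hs -mderivmDm -/m -eg exprS; ring.
  by rewrite -dg.
have HK : forall k, k \in index_iota 0 (r j) -> Good (t + dc + u * dc)
    (fun f => C ^+ u * p * ((q j * l j k) * f^`M[U_(j) *+ k])^`M[γ]).
  move=> k; rewrite mem_index_iota => /andP [_ kr].
  have [s [Hs Hall]] := mcommute (q j * l j k) γ.
  have Ha := Hqd jS (ltnW kr).
  apply: Good_ext (Good_add (IH (t + dc) (p * (q j * l j k)) (U_(j) *+ k + γ)%MM _ _ _)
     (Good_X IH (t:=t) (p:=p) (j:=j) (k:=k) (a:= q j * l j k) (s:=s) (g:=γ)
        jS (ltnW kr) Hp Ha Hγ _ Hall)).
  - by move=> f; rewrite Hs -mderivmDm; ring.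
  - exact: tdeg_leM.
  - exact: suppS_add (suppS_U _ jS) Hγ.
  - apply/orP; left; rewrite mdegD mdegMn mdeg1 mul1n; lia.
  - lia.
have HR : Good (t + u.+1 * dc) (fun f => C ^+ u * p * (Lt j f)^`M[γ]
                               - C ^+ u.+1 * (p * f^`M[g])).
  move: HL; rewrite T0 => HL.
  apply: Good_ext (Good_add (Good_sum HK) HL) => f.
  by rewrite LtE' linear_sum big_nat_recr //= mulrDr mulr_sumr addrA.
by apply: Good_ext (Good_sub HJ HR) => f; ring.
Qed.

End Main.

Lemma msize_le_mul (K : fieldType) n (a b : {mpoly K[n]}) :
  b != 0 -> (msize a <= msize (b * a))%N.
Proof.
move=> bn0; have [->|an0] := eqVneq a 0; first by rewrite msize0.
rewrite msizeM //.
have : (0 < msize b)%N by rewrite lt0n msize_poly_eq0.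
by case: (msize b) => // x _; rewrite addSn /= leq_addl.
Qed.

Lemma tdeg_le_prod (K : fieldType) n (Q : pred 'I_n) (l : 'I_n -> nat -> {mpoly K[n]}) r :
  tdeg_le (\sum_(i | Q i) dj l r i)%N (\prod_(i | Q i) l i (r i)).
Proof.
elim/big_rec2: _ => [|i d p _ H]; first by rewrite /tdeg_le msize1.
apply: tdeg_leM => //.
apply: (tdeg_le_mono _ (tdeg_le_tdeg _)).
by rewrite /dj (@leq_bigmax_cond _ _ (fun k : 'I_(r i).+1 => tdeg (l i k)) ord_max).
Qed.

Lemma tdeg_le_dj (K : fieldType) n (l : 'I_n -> nat -> {mpoly K[n]}) r j k :
  (k <= r j)%N -> tdeg_le (dj l r j) (l j k).
Proof.
move=> kr; apply: (tdeg_le_mono _ (tdeg_le_tdeg _)).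
have kr' : (k < (r j).+1)%N by [].
by rewrite /dj (@leq_bigmax_cond _ _ (fun k : 'I_(r j).+1 => tdeg (l j k)) (Ordinal kr')).
Qed.

Unset Implicit Arguments.
Theorem lemma3p13 (K : fieldType) (n : nat)
  (charK : [pchar K] =i pred0)
  (S : {set 'I_n}) (HS : S != set0)
  (r : 'I_n -> nat) (l : 'I_n -> nat -> {mpoly K[n]})
  (Hl : forall j, j \in S -> l j (r j) != 0)
  (C : {mpoly K[n]}) (HC : is_lcm S (fun j => l j (r j)) C)
  (q : 'I_n -> {mpoly K[n]}) (Hq : forall j, j \in S -> C = q j * l j (r j)) :
  let Lt := fun j (f : {mpoly K[n]}) => q j * Lop l r j f in
  (forall (u t : nat) (v : int), v <= u%:Z ->
     forall h, inH S r t v h ->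
     exists h' g, inH S r (t + u * dC S l r)%N 0 h' /\ inJ S Lt g /\
       (fun f => C ^+ u * h f) = (fun f => h' f + g f))
  /\
  (forall alpha : 'X_{1..n}, suppS S alpha ->
     exists h' g, inH S r (mdeg alpha * dC S l r)%N 0 h' /\ inJ S Lt g /\
       (fun f => C ^+ (mdeg alpha) * f^`M[alpha]) = (fun f => h' f + g f)).
Proof.
move=> Lt.
set dc := dC S l r.
set Pr := \prod_(i in S) l i (r i).
have Prn0 : Pr != 0 by apply/prodf_neq0.
have PrE : forall j, j \in S -> Pr = (\prod_(i | (i \in S) && (i != j)) l i (r i)) * l j (r j).
  by move=> j jS; rewrite /Pr (bigD1 j) //= mulrC.
have [q' Eq'] : mdvd C Pr.
  by apply: HC.2 => j jS; exists (\prod_(i | (i \in S) && (i != j)) l i (r i)); apply: PrE.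
have q'n0 : q' != 0 by apply: contraNneq Prn0 => e; rewrite Eq' e mul0r.
have HCd : tdeg_le dc C.
  apply: (tdeg_le_mono (leqnn _)); rewrite /tdeg_le.
  apply: leq_trans (msize_le_mul C q'n0) _; rewrite -Eq'.
  exact: tdeg_le_prod.
have Hqd : forall j k, j \in S -> (k <= r j)%N -> tdeg_le dc (q j * l j k).
  move=> j k jS kr.
  have e : \prod_(i | (i \in S) && (i != j)) l i (r i) = q' * q j.
    apply: (mulIf (Hl j jS)); rewrite -PrE // Eq' (Hq j jS) mulrA //.
  have -> : dc = ((\sum_(i | (i \in S) && (i != j)) dj l r i) + dj l r j)%N.
    by rewrite /dc /dC (bigD1 j) //= addnC.
  apply: tdeg_leM; last exact: tdeg_le_dj.
  rewrite /tdeg_le; apply: leq_trans (msize_le_mul (q j) q'n0) _; rewrite -e.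
  exact: tdeg_le_prod.
have LtE : forall j f, Lt j f = q j * Lop l r j f by [].
have P1 : forall (u t : nat) (v : int), v <= u%:Z ->
     forall h, inH S r t v h ->
     exists h' g, inH S r (t + u * dC S l r)%N 0 h' /\ inJ S Lt g /\
       (fun f => C ^+ u * h f) = (fun f => h' f + g f).
  move=> u t v hv h [s [-> Hall]].
  have Hs : all (fun pb => [&& tdeg_le t pb.1, suppS S pb.2 & (mdeg pb.2 <= u)%N || inB S r pb.2]) s.
    apply/allP => pb /(allP Hall) /and3P [h1 h2 h3]; rewrite h1 h2 /=.
    case/orP: h3 => [h3|->]; last by rewrite orbT.
    by rewrite -(lez_nat (mdeg pb.2) u) (le_trans h3 hv).
  have [s1 [s2 [H1 E]]] := seq_good (main Hq HCd Hqd LtE (u:=u)) Hs.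
  exists (wop s1), (fun f => \sum_(j in S) wop (s2 j) (Lt j f)).
  split; first by exists s1; split.
  split; first by exists s2.
  by apply: functional_extensionality => f; rewrite E.
split => // alpha Ha.
have := P1 (mdeg alpha) 0%N (mdeg alpha)%:Z (lexx _) (fun f => f^`M[alpha]).
rewrite add0n; apply.
exists [:: (1, alpha)]; split.
  by apply: functional_extensionality => f; rewrite wop_cons wop_nil mul1r addr0.
by rewrite /= andbT Ha lexx /tdeg_le msize1.
Qed.
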